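(* Let $\hat A$ be a collection of pairwise disjoint nonempty connected subsets of $S^1$ with $|\hat A|\ge 3$ such that $\bigcup_{J\in\hat A}J$ is dense in $S^1$ and each $J\in\hat A$ is either a single point or an open interval. Let $h:\hat A\to\hat A$ be an order preserving bijection, and let $g_1,g_2:S^1\to S^1$ be orientation preserving homeomorphisms both compatible with $h$. Then $g_1$ and $g_2$ have the same rotation number.
   Context: A bijection $h:\hat A\to\hat A$ of a collection of pairwise disjoint subsets of $S^1$ is order preserving if there is a homeomorphism $g:S^1\to S^1$ with $g(J)=h(J)$ for all $J\in\hat A$; such $g$ is called compatible with $h$. The rotation number of an orientation preserving homeomorphism $g$ of $S^1$ is $\lim_{n\to\infty}G^n(x)/n \pmod 1$, where $G:\mathbb{R}\to\mathbb{R}$ is any lift of $g$ under $\theta\mapsto e^{2\pi i\theta}$ and $x\in\mathbb{R}$ is arbitrary (this is well defined modulo $1$). *)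

(* Defs.v *)
From HB Require Import structures.
From mathcomp Require Import all_boot all_order all_algebra.
From mathcomp Require Import all_classical all_reals all_analysis.
Import numFieldNormedType.Exports.
Set Implicit Arguments. Unset Strict Implicit. Unset Printing Implicit Defensive.
Import Order.TTheory GRing.Theory Num.Theory.
Local Open Scope classical_set_scope.
Local Open Scope ring_scope.

Section Circle.
Variable R : realType.

Definition S1 : set (R * R) := [set z | z.1 ^+ 2 + z.2 ^+ 2 = 1].

Definition cover (t : R) : R * R := (cos (2 * pi * t), sin (2 * pi * t)).

Definition circ_homeo (g : R * R -> R * R) : Prop :=
  set_bij S1 S1 g /\ {within S1, continuous g} /\
  exists f : R * R -> R * R,
    set_bij S1 S1 f /\ {within S1, continuous f} /\
    (forall z, S1 z -> f (g z) = z) /\ (forall z, S1 z -> g (f z) = z).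

Definition is_lift (g : R * R -> R * R) (G : R -> R) : Prop :=
  continuous G /\ forall t, cover (G t) = g (cover t).

Definition orient_pres_homeo (g : R * R -> R * R) : Prop :=
  circ_homeo g /\ exists G, is_lift g G /\ forall t, G (t + 1) = G t + 1.

Definition has_rotation_number (g : R * R -> R * R) (r : R) : Prop :=
  forall G, is_lift g G -> forall x : R,
    exists k : int,
      (fun n : nat => iter n G x / n%:R) @ \oo --> r + k%:~R.

Definition open_arc (J : set (R * R)) : Prop :=
  exists a b : R, a < b /\ b - a < 1 /\ J = cover @` `]a, b[.

Definition compatible (Ahat : set (set (R * R)))
    (h : set (R * R) -> set (R * R)) (g : R * R -> R * R) : Prop :=
  forall J, Ahat J -> g @` J = h J.

Definition order_preserving (Ahat : set (set (R * R)))
    (h : set (R * R) -> set (R * R)) : Prop :=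
  exists g, circ_homeo g /\ compatible Ahat h g.

End Circle.

(* Main.v *)
Require Import Defs.
From HB Require Import structures.
From mathcomp Require Import all_boot all_order all_algebra.
From mathcomp Require Import all_classical all_reals all_analysis.
From mathcomp Require Import ring lra zify unstable.
Import numFieldNormedType.Exports.
Set Implicit Arguments. Unset Strict Implicit. Unset Printing Implicit Defensive.
Import Order.TTheory GRing.Theory Num.Theory.
Local Open Scope classical_set_scope.
Local Open Scope ring_scope.
Section S.
Variable R : realType.
Local Notation cover := (@Defs.cover R).
Local Notation S1 := (@Defs.S1 R).
Implicit Types s t : R.
Lemma cover_natD t (n : nat) : cover (t + n%:R) = cover t.
Proof.
rewrite /Defs.cover.
have -> : 2 * pi * (t + n%:R) = 2 * pi * t + pi *+ 2 *+ n.
  by rewrite -mulrnA -(mulr_natl pi (2 * n)) natrM; ring.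
by rewrite (periodicn (@cosD2pi R)) (periodicn (@sinD2pi R)).
Qed.
Lemma cover_intD t (m : int) : cover (t + m%:~R) = cover t.
Proof.
case: m => n; first by rewrite -pmulrn cover_natD.
have := cover_natD (t - n.+1%:R) n.+1; rewrite subrK => <-; congr cover.
Qed.

Lemma cover_S1 t : S1 (cover t).
Proof. by rewrite /Defs.S1 /Defs.cover /= cos2Dsin2. Qed.

Lemma cos2pi_eq1 (d : R) : cos (2 * pi * d) = 1 -> exists m : int, d = m%:~R.
Proof.
move=> h.
exists (Num.floor d).
set e := d - (Num.floor d)%:~R.
have e0 : 0 <= e by rewrite subr_ge0 floor_le.
have e1 : e < 1 by rewrite ltrBlDr addrC -[1]/(1%:~R) -intrD floorD1_gt.
suff : e = 0 by move/eqP; rewrite subr_eq0 => /eqP.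
have he : cos (2 * pi * e) = 1.
  have : cover d = cover (e + (Num.floor d)%:~R) by rewrite /e subrK.
  by rewrite cover_intD => -[<-].
have pi0 := @pi_gt0 R.
have [hle|hlt] := leP (2 * pi * e) pi.
  have : 2 * pi * e = 0.
    apply: (@cos_inj R).
    - by rewrite in_itv /= hle andbT !mulr_ge0 // ltW.
    - by rewrite in_itv /= lexx pi_ge0.
    - by rewrite he cos0.
  move/eqP; rewrite mulf_eq0 mulf_eq0 (gt_eqF pi0) orbF => /orP[|/eqP //].
  by rewrite (@pnatr_eq0 R 2).
have : cos (pi *+ 2 - 2 * pi * e) = 1.
  by rewrite cosB cos2pi sin2pi he mul1r mul0r addr0.
have : 0 < pi *+ 2 - 2 * pi * e < pi.
  have h2 : 2 * pi * e < 2 * pi by rewrite gtr_pMr // mulr_gt0.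
  move: hlt h2; rewrite mulr2n; set p := 2 * pi * e; move=> *; apply/andP; split; lra.
move=> /andP[a b] hc.
have : pi *+ 2 - 2 * pi * e = 0.
  apply: (@cos_inj R).
  - by rewrite in_itv /= (ltW a) (ltW b).
  - by rewrite in_itv /= lexx pi_ge0.
  - by rewrite hc cos0.
by move/eqP; rewrite (gt_eqF a).
Qed.

Lemma cover_eqZ s s' : cover s = cover s' -> exists m : int, s = s' + m%:~R.
Proof.
move=> [hc hs].
have : cos (2 * pi * (s - s')) = 1.
  by rewrite mulrBr cosB hc hs -!expr2 cos2Dsin2.
move/cos2pi_eq1 => [m hm]; exists m; rewrite -hm; ring.
Qed.

Lemma cover_surj z : S1 z -> exists t, cover t = z.
Proof.
case: z => x y; rewrite /Defs.S1 /= => hxy.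
have hx : -1 <= x <= 1.
  have : x ^+ 2 <= 1 by rewrite -hxy lerDl sqr_ge0.
  move=> h2; apply/andP; split; nra.
have pi0 := @pi_gt0 R.
have sq : Num.sqrt (1 - x ^+ 2) = `|y| by rewrite -hxy addrC addKr sqrtr_sqr.
have [y0|y0] := leP 0 y.
  exists (acos x / (2 * pi)); rewrite /Defs.cover mulrC divfK ?mulf_neq0 ?gt_eqF //.
  by rewrite acosK ?in_itv //= sin_acos // sq ger0_norm.
exists (- acos x / (2 * pi)); rewrite /Defs.cover mulrC divfK ?mulf_neq0 ?gt_eqF //.
by rewrite cosN sinN acosK ?in_itv //= sin_acos // sq ltr0_norm // opprK.
Qed.
End S.
Section S.
Variable R : realType.
Local Notation cover := (@Defs.cover R).
Local Notation S1 := (@Defs.S1 R).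
Implicit Types s t : R.

Definition per1 (F : R -> R) := forall t, F (t + 1) = F t + 1.

Lemma lift_natD F : per1 F -> forall t (n : nat), F (t + n%:R) = F t + n%:R.
Proof.
move=> hF t; elim=> [|n ih]; first by rewrite !addr0.
by rewrite -addn1 natrD addrA hF ih addrA.
Qed.

Lemma lift_intD F : per1 F -> forall t (m : int), F (t + m%:~R) = F t + m%:~R.
Proof.
move=> hF t [n|n]; first by rewrite -pmulrn lift_natD.
rewrite NegzE mulrNz.
have h := lift_natD hF (t - n.+1%:R) n.+1; rewrite subrK in h.
rewrite -pmulrn h addrK //.
Qed.

Lemma lft_inj (g : R * R -> R * R) F : set_inj S1 g ->
  (forall t, cover (F t) = g (cover t)) -> per1 F -> injective F.
Proof.
move=> gi hl hF s s' e.
have : cover s = cover s'.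
  apply: gi; rewrite ?inE; try exact: cover_S1.
  by rewrite -!hl e.
case/cover_eqZ => m hm; rewrite hm lift_intD // in e.
have m0 : (m%:~R : R) = 0 by lra.
by rewrite hm m0 addr0.
Qed.

Lemma lift_mono F : continuous F -> injective F -> per1 F ->
  {mono F : x y / x <= y}.
Proof.
move=> Fc Fi hF.
have [h|h] : strict_monotonic `]-oo, +oo[ F.
  apply: itv_continuous_inj_mono; first by apply: continuous_subspaceT.
  by move=> x y _ _; exact: Fi.
- by apply: le_mono => x y xy; apply: h; rewrite ?in_itv.
- have := h 1 0; rewrite !in_itv /= => /(_ isT isT ltr01).
  have e := hF 0; rewrite add0r in e; rewrite e; lra.
Qed.

Lemma cont_int_const (D : R -> R) a b : a <= b -> continuous D ->
  (forall x, exists k : int, D x = k%:~R) -> D a = D b.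
Proof.
move=> ab Dc Dk.
have [ka hka] := Dk a; have [kb hkb] := Dk b.
have Dcw : {within `[a, b], continuous D} by apply: continuous_subspaceT.
have key : forall k : int, forall v, (exists2 c, c \in `[a, b] & D c = v) ->
   v = k%:~R + 2^-1 \/ v = k%:~R - 2^-1 -> False.
  move=> k v [c _ hc] hv; have [kc hkc] := Dk c.
  have : ((kc - k) * 2)%:~R = (1 : R) \/ ((kc - k) * 2)%:~R = (-1 : R).
    rewrite intrM intrB -hkc hc; case: hv => ->; [left|right]; lra.
  case=> h1.
  - have : (kc - k) * 2 = 1 by apply/eqP; rewrite -(eqr_int R) h1.
    lia.
  - have : (kc - k) * 2 = -1 by apply/eqP; rewrite -(eqr_int R) h1 intrN.
    lia.
rewrite hka hkb; congr intmul.
have [lt|gt|//] := ltgtP ka kb.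
- exfalso; apply: (key ka (ka%:~R + 2^-1)); last by left.
  apply: IVT => //; rewrite hka hkb.
  have : ka + 1 <= kb by lia.
  rewrite -(ler_int R) intrD => h.
  rewrite ge_min le_max; apply/andP; split; apply/orP; [left|right]; lra.
- exfalso; apply: (key ka (ka%:~R - 2^-1)); last by right.
  apply: IVT => //; rewrite hka hkb.
  have : kb + 1 <= ka by lia.
  rewrite -(ler_int R) intrD => h.
  rewrite ge_min le_max; apply/andP; split; apply/orP; [right|left]; lra.
Qed.

Lemma lift_diff F G : continuous F -> continuous G ->
  (forall t, cover (G t) = cover (F t)) -> exists c : int, forall t, G t = F t + c%:~R.
Proof.
move=> Fc Gc hGF.
have Dk : forall x, exists k : int, (G \- F) x = k%:~R.
  move=> x; have [m hm] := cover_eqZ (hGF x); exists m => /=; rewrite hm; ring.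
have Dc : continuous (G \- F).
  by move=> x; apply: continuousB; [exact: Gc|exact: Fc].
have [c hc] := Dk 0; exists c => t.
have : (G \- F) t = (G \- F) 0.
  have [t0|t0] := leP 0 t.
    by rewrite (cont_int_const t0 Dc Dk).
  by rewrite (cont_int_const (ltW t0) Dc Dk).
rewrite hc /= => h; rewrite -h; ring.
Qed.
End S.
Section S.
Variable R : realType.
Local Notation cover := (@Defs.cover R).
Local Notation S1 := (@Defs.S1 R).
Implicit Types s t : R.

Section Rot.
Variable F : R -> R.
Hypothesis Fh : {homo F : x y / x <= y}.
Hypothesis Fp : per1 F.

Lemma iter_homo n : {homo iter n F : x y / x <= y}.
Proof. by elim: n => [//|n ih] x y xy /=; apply/Fh/ih. Qed.

Lemma iter_per1 n : per1 (iter n F).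
Proof. by elim: n => [//|n ih] t /=; rewrite ih Fp. Qed.

Lemma disp_bound n x y : `|(iter n F y - y) - (iter n F x - x)| <= 1.
Proof.
set m := Num.floor (y - x).
have h1 : m%:~R <= y - x by apply: floor_le.
have h2 : y - x < (m + 1)%:~R by apply: floorD1_gt.
rewrite intrD in h2.
set y' := y - m%:~R.
have ey : iter n F y = iter n F y' + m%:~R.
  rewrite -lift_intD; last exact: iter_per1. by rewrite /y' subrK.
have a1 : iter n F x <= iter n F y' by apply: iter_homo; rewrite /y'; lra.
have a2 : iter n F y' <= iter n F x + 1.
  by rewrite -(iter_per1 n x); apply: iter_homo; rewrite /y'; lra.
rewrite ey ler_norml; apply/andP; split; rewrite /y' in a1 a2 *; lra.
Qed.

Lemma disp_mul k n x :
  `|(iter (k * n) F x - x) - k%:R * (iter n F x - x)| <= k%:R.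
Proof.
elim: k => [|k ih]; first by rewrite mul0n /= mul0r !subrr normr0.
rewrite mulSn iterD.
set y := iter (k * n) F x.
have hb := disp_bound n x y.
have e : iter n F y - x - k.+1%:R * (iter n F x - x) =
   ((iter n F y - y) - (iter n F x - x)) + ((y - x) - k%:R * (iter n F x - x)).
  by rewrite -addn1 natrD; ring.
rewrite e -addn1 natrD; apply: le_trans (ler_normD _ _) _; lra.
Qed.

Definition vseq (x : R) (n : nat) := (iter n F x - x) / n%:R.

Lemma vseq_mul m n x : (0 < m)%N -> (0 < n)%N ->
  `|vseq x (m * n) - vseq x n| <= n%:R^-1.
Proof.
move=> m0 n0.
have mR : (0 : R) < m%:R by rewrite ltr0n.
have nR : (0 : R) < n%:R by rewrite ltr0n.
have e : vseq x (m * n) - vseq x n =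
  ((iter (m * n) F x - x) - m%:R * (iter n F x - x)) / (m%:R * n%:R).
  rewrite /vseq natrM; field.
  by rewrite !gt_eqF.
rewrite e normrM [`|(_ * _)^-1|]ger0_norm; last by rewrite invr_ge0 mulr_ge0 ?ltW.
rewrite ler_pdivrMr ?mulr_gt0 //.
have -> : n%:R^-1 * (m%:R * n%:R) = m%:R :> R by field; rewrite gt_eqF.
exact: disp_mul.
Qed.

Lemma vseq_cauchy m n x : (0 < m)%N -> (0 < n)%N ->
  `|vseq x m - vseq x n| <= m%:R^-1 + n%:R^-1.
Proof.
move=> m0 n0.
have h1 := vseq_mul x m0 n0.
have h2 := vseq_mul x n0 m0; rewrite mulnC in h1.
have e : vseq x m - vseq x n = (vseq x (n * m) - vseq x n) - (vseq x (n * m) - vseq x m) by ring.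
rewrite e; apply: le_trans (ler_normB _ _) _; lra.
Qed.

End Rot.
End S.
Section S.
Variable R : realType.
Local Notation cover := (@Defs.cover R).
Local Notation S1 := (@Defs.S1 R).
Implicit Types s t : R.

Lemma my_cvg_bnd (u : nat -> R) l (C : R) :
  (forall n, (0 < n)%N -> `|u n - l| <= C / n%:R) -> u @ \oo --> l.
Proof.
move=> hb; apply/cvgrPdist_lt => e e0.
near=> n.
have n0 : (0 < n)%N by near: n; exact: nbhs_infty_gt.
have nC : C / e < n%:R by near: n; exact: nbhs_infty_gtr.
have nR : (0 : R) < n%:R by rewrite ltr0n.
rewrite distrC; apply: le_lt_trans (hb n n0) _.
rewrite ltr_pdivrMr //; rewrite ltr_pdivrMr // in nC.
by rewrite mulrC.
Unshelve. all: by end_near.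
Qed.

Lemma inv_nat_le (M n : nat) : (0 < M)%N -> (M <= n)%N -> (n%:R : R)^-1 <= M%:R^-1.
Proof.
move=> M0 Mn.
rewrite lef_pV2 ?posrE ?ltr0n ?ler_nat //; exact: leq_trans Mn.
Qed.

Lemma vseq_cvg (F : R -> R) : {homo F : x y / x <= y} -> per1 F -> forall x, cvg (vseq F x @ \oo).
Proof.
move=> Fh Fp x.
apply: cauchy_cvg; apply: cauchy_exP => e e0.
set M := (Num.truncn (2 / e)).+1.
have hM : 2 / e < M%:R by apply: truncnS_gt.
have M0 : (0 < M)%N by [].
exists (vseq F x M); exists M => // n /= Mn.
have n0 : (0 < n)%N by exact: leq_trans Mn.
rewrite -ball_normE /ball_ /=.
apply: le_lt_trans (vseq_cauchy Fh Fp x M0 n0) _.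
have := inv_nat_le M0 Mn.
have MR : (0 : R) < M%:R by rewrite ltr0n.
rewrite ltr_pdivrMr // in hM.
have : 2 / M%:R < e.
  by rewrite ltr_pdivrMr // mulrC.
have -> : (2 : R) / M%:R = M%:R^-1 + M%:R^-1 by field; rewrite gt_eqF.
lra.
Qed.

Lemma rot_exists (F : R -> R) : {homo F : x y / x <= y} -> per1 F ->
  exists rho : R, forall x, (fun n => iter n F x / n%:R) @ \oo --> rho.
Proof.
move=> Fh Fp.
exists (limn (vseq F 0)) => x.
have h0 : (fun n => iter n F x / n%:R - vseq F 0 n) @ \oo --> 0.
  apply: (@my_cvg_bnd _ _ (1 + `|x|)) => n n0.
  have nR : (0 : R) < n%:R by rewrite ltr0n.
  have e : iter n F x / n%:R - vseq F 0 n - 0 =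
     (((iter n F x - x) - (iter n F 0 - 0)) + x) / n%:R.
    by rewrite /vseq; field; rewrite gt_eqF.
  rewrite e normrM [`|_^-1|]ger0_norm; last by rewrite invr_ge0 ltW.
  rewrite ler_pM2r ?invr_gt0 //.
  apply: le_trans (ler_normD _ _) _.
  have := disp_bound Fh Fp n 0 x; lra.
rewrite (_ : (fun n => iter n F x / n%:R) =
   ((fun n => iter n F x / n%:R - vseq F 0 n) \+ vseq F 0)); last first.
  by apply/funext => n /=; rewrite subrK.
rewrite -[limn _]add0r; exact: cvgD h0 (vseq_cvg (x:=0) Fh Fp).
Qed.
End S.
Section S.
Variable R : realType.
Local Notation cover := (@Defs.cover R).
Local Notation S1 := (@Defs.S1 R).
Implicit Types s t p q u : R.

Definition btw (p u q : R) := (p <= u /\ u <= q) \/ (q <= u /\ u <= p).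

Lemma btw_sym p u q : btw p u q -> btw q u p.
Proof. by case=> ?; [right|left]. Qed.

Lemma btw_split p q r u : btw p u r -> btw p u q \/ btw q u r.
Proof.
rewrite /btw => -[[a b]|[a b]]; case: (leP u q) => uq.
- by left; left; split.
- by right; left; split; lra.
- by right; right; split; lra.
- by left; right; split; lra.
Qed.

Lemma btw_sub p q r u : btw p r q -> btw p u r -> btw p u q.
Proof. rewrite /btw => -[[a b]|[a b]] [[c d]|[c d]]; lra. Qed.

Section Comb.
Variable Ahat : set (set (R * R)).
Variable h : set (R * R) -> set (R * R).
Hypothesis Asub : forall J, Ahat J -> J `<=` S1.
Hypothesis Ane : forall J, Ahat J -> J !=set0.
Hypothesis Adis : forall J K, Ahat J -> Ahat K -> J <> K -> J `&` K = set0.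
Hypothesis Atwo : exists J1 J2, [/\ Ahat J1, Ahat J2 & J1 <> J2].
Hypothesis Ashape : forall J, Ahat J -> (exists z, J = [set z]) \/ open_arc J.
Hypothesis hfun : forall J, Ahat J -> Ahat (h J).

Lemma same_K J K z : Ahat J -> Ahat K -> J z -> K z -> J = K.
Proof.
move=> AJ AK Jz Kz; have [//|ne] := pselect (J = K).
by have := Adis AJ AK ne; move/seteqP => [/(_ z) /= H _]; case: (H (conj Jz Kz)).
Qed.

Definition rel p q := exists2 K, Ahat K & forall u, btw p u q -> K (cover u).

Lemma rel_sym p q : rel p q -> rel q p.
Proof. by case=> K AK HK; exists K => // u /btw_sym /HK. Qed.

Lemma rel_refl K p : Ahat K -> K (cover p) -> rel p p.
Proof. by move=> AK Kp; exists K => // u [[a b]|[a b]]; have -> : u = p by lra. Qed.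

Lemma rel_trans p q r : rel p q -> rel q r -> rel p r.
Proof.
move=> [K AK HK] [K' AK' HK'].
have e : K = K'.
  apply: (same_K (z := cover q)) => //; [apply: HK|apply: HK']; rewrite /btw; lra.
exists K => // u /(btw_split q) [/HK //|]; rewrite e; exact: HK'.
Qed.

Lemma rel_transl p q (m : int) : rel p q -> rel (p + m%:~R) (q + m%:~R).
Proof.
move=> [K AK HK]; exists K => // u hu.
by rewrite -(subrK m%:~R u) cover_intD; apply: HK; case: hu => -[a b]; [left|right]; split; lra.
Qed.

Lemma rel_sub p q r : rel p q -> btw p r q -> rel p r.
Proof. by move=> [K AK HK] hr; exists K => // u hu; apply: HK; exact: btw_sub hu. Qed.

Lemma rel_sub' p q r : rel p q -> btw p r q -> rel r q.
Proof. by move=> /rel_sym hpq /btw_sym hr; apply: rel_sym; exact: rel_sub hr. Qed.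

Lemma btw_l a b : btw a a b.
Proof. by case: (leP a b) => ?; [left|right]; split; lra. Qed.

Lemma shift_into lo t : exists t', [/\ lo <= t', t' <= lo + 1 & cover t' = cover t].
Proof.
set m := Num.floor (t - lo).
have h1 : m%:~R <= t - lo by apply: floor_le.
have h2 : t - lo < (m + 1)%:~R by apply: floorD1_gt.
rewrite intrD in h2.
exists (t - m%:~R); split; [lra|lra|].
by rewrite -[in RHS](subrK m%:~R t) cover_intD.
Qed.

Lemma rel_bound p q : rel p q -> `|p - q| < 1.
Proof.
move=> [K AK HK]; rewrite ltNge; apply/negP => h1.
have [J' AJ' neJ'] : exists2 J', Ahat J' & J' <> K.
  have [J1 [J2 [A1 A2 ne]]] := Atwo.
  have [e|ne1] := pselect (J1 = K); last by exists J1.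
  by exists J2 => // e2; apply: ne; rewrite e e2.
have [z Jz] := Ane AJ'.
have [t ht] := cover_surj (Asub AJ' Jz).
apply: neJ'; apply: (same_K (z := z)) => //.
have [pq|qp] := leP p q.
- have [t' [a b c]] := shift_into p t.
  rewrite -ht -c; apply: HK; left; move: h1; rewrite ler0_norm ?subr_le0 //; lra.
- have [t' [a b c]] := shift_into q t.
  rewrite -ht -c; apply: HK; right; move: h1; rewrite ger0_norm; last by rewrite subr_ge0 ltW.
  lra.
Qed.

Lemma rel_translate K p q : Ahat K -> K (cover p) -> K (cover q) ->
  exists m : int, rel p (q + m%:~R).
Proof.
move=> AK Kp Kq.
case: (Ashape AK) => [[z ez]|[a [b [ab [ba eK]]]]].
- have Kp' := Kp; rewrite ez in Kp Kq.
  have [m hm] := cover_eqZ (etrans Kp (esym Kq)).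
  by exists m; rewrite -hm; exact: rel_refl AK Kp'.
- have Kp' := Kp; have Kq' := Kq; rewrite eK in Kp Kq.
  case: Kp => v hv ev; case: Kq => v' hv' ev'.
  have [i hi] := cover_eqZ (esym ev); have [i' hi'] := cover_eqZ (esym ev').
  exists (i - i'); exists K => // u hu.
  rewrite eK; exists (u - i%:~R); last first.
    by rewrite -[in RHS](subrK i%:~R u) cover_intD.
  move: hv hv'; rewrite /= !in_itv /= => /andP[hv1 hv2] /andP[hv3 hv4].
  rewrite intrB in hu.
  apply/andP; case: hu => -[c d]; split; lra.
Qed.

Lemma rel_image (F : R -> R) (g : R * R -> R * R) : continuous F ->
  {mono F : x y / x <= y} -> (forall t, cover (F t) = g (cover t)) ->
  compatible Ahat h g -> forall p q, rel p q -> rel (F p) (F q).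
Proof.
move=> Fc Fm Fl Fcomp.
have key : forall p q u, p <= q -> F p <= u <= F q -> exists2 w, p <= w <= q & F w = u.
  move=> p q u pq hu.
  have Fcw : {within `[p, q], continuous F} by apply: continuous_subspaceT.
  have hu' : Num.min (F p) (F q) <= u <= Num.max (F p) (F q).
    by case/andP: hu => a b; rewrite ge_min le_max a b orbT.
  have [w hw fw] := IVT pq Fcw hu'.
  by exists w => //; rewrite in_itv /= in hw.
move=> p q [K AK HK]; exists (h K); first exact: hfun.
move=> u hu.
have [w hw <-] : exists2 w, btw p w q & F w = u.
  case: hu => -[a b].
  - have pq : p <= q by rewrite -Fm; lra.
    have [w /andP[c d] e] := key p q u pq (introT andP (conj a b)).
    by exists w => //; left.
  - have qp : q <= p by rewrite -Fm; lra.
    have [w /andP[c d] e] := key q p u qp (introT andP (conj a b)).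
    by exists w => //; right.
rewrite Fl -(Fcomp K AK); exists (cover w) => //; exact: HK.
Qed.

Lemma rel_preimage (F : R -> R) (g : R * R -> R * R) :
  {mono F : x y / x <= y} -> (forall t, cover (F t) = g (cover t)) ->
  compatible Ahat h g -> set_inj S1 g ->
  forall K p q, Ahat K -> K (cover p) -> rel (F p) (F q) -> rel p q.
Proof.
move=> Fm Fl Fcomp gi K p q AK Kp [K' AK' HK'].
have e : K' = h K.
  apply: (same_K (z := cover (F p))) => //; first exact: hfun.
  - by apply: HK'; exact: btw_l.
  - by rewrite Fl -(Fcomp K AK); exists (cover p).
exists K => // u hu.
have : K' (cover (F u)) by apply: HK'; case: hu => -[a b]; [left|right]; rewrite !Fm.
rewrite e -(Fcomp K AK) Fl => -[v Kv gv].
have -> // : cover u = v.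
apply: gi => //; apply: mem_set; [exact: cover_S1 | exact: Asub Kv].
Qed.

Section Two.
Variables (F1 F2 : R -> R) (g1 g2 : R * R -> R * R).
Hypotheses (F1c : continuous F1) (F2c : continuous F2).
Hypotheses (F1m : {mono F1 : x y / x <= y}) (F2m : {mono F2 : x y / x <= y}).
Hypotheses (F1l : forall t, cover (F1 t) = g1 (cover t)).
Hypotheses (F2l : forall t, cover (F2 t) = g2 (cover t)).
Hypotheses (F1p : per1 F1) (F2p : per1 F2).
Hypotheses (comp1 : compatible Ahat h g1) (comp2 : compatible Ahat h g2).
Hypotheses (gi1 : set_inj S1 g1) (gi2 : set_inj S1 g2).
Variables (t0 : R) (J0 : set (R * R)).
Hypotheses (AJ0 : Ahat J0) (J0t0 : J0 (cover t0)).
Hypothesis base : rel (F2 t0) (F1 t0).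

Lemma cover_img (F : R -> R) g K t : (forall t, cover (F t) = g (cover t)) ->
  compatible Ahat h g -> Ahat K -> K (cover t) -> (h K) (cover (F t)).
Proof. by move=> Fl Fcomp AK Kt; rewrite Fl -(Fcomp K AK); exists (cover t). Qed.

Lemma claim0 t K : t0 <= t <= t0 + 1 -> Ahat K -> K (cover t) -> rel (F2 t) (F1 t).
Proof.
move=> /andP[ta tb] AK Kt.
have e1 : (1%:~R : R) = 1 by [].
have base1 : rel (F2 (t0 + 1)) (F1 (t0 + 1)).
  by rewrite F1p F2p; have := rel_transl 1 base; rewrite e1.
have [r1|n1] := pselect (rel t t0).
  apply: rel_trans (rel_image F2c F2m F2l comp2 r1) _.
  apply: rel_trans base _; apply: rel_sym; by have := rel_image F1c F1m F1l comp1 r1.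
have [r2|n2] := pselect (rel t (t0 + 1)).
  apply: rel_trans (rel_image F2c F2m F2l comp2 r2) _.
  apply: rel_trans base1 _; apply: rel_sym; by have := rel_image F1c F1m F1l comp1 r2.
have tt0 : t0 < t.
  rewrite lt_neqAle ta andbT; apply/eqP => e; apply: n1; rewrite e.
  exact: rel_refl AK Kt.
have tt1 : t < t0 + 1.
  rewrite lt_neqAle tb andbT; apply/eqP => e; apply: n2; rewrite e.
  by apply: rel_refl AK _; rewrite -e.
have n1a : ~ rel (F1 t) (F1 t0) by move=> r; apply: n1; by have := rel_preimage F1m F1l comp1 gi1 AK Kt r.
have n1b : ~ rel (F2 t) (F2 t0) by move=> r; apply: n1; by have := rel_preimage F2m F2l comp2 gi2 AK Kt r.
have n2a : ~ rel (F1 t) (F1 t0 + 1) by rewrite -F1p => r; apply: n2; by have := rel_preimage F1m F1l comp1 gi1 AK Kt r.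
have n2b : ~ rel (F2 t) (F2 t0 + 1) by rewrite -F2p => r; apply: n2; by have := rel_preimage F2m F2l comp2 gi2 AK Kt r.
have F1lt := leW_mono F1m; have F2lt := leW_mono F2m.
have ax : F1 t0 < F1 t by rewrite F1lt.
have xa : F1 t < F1 t0 + 1 by rewrite -F1p F1lt.
have by_ : F2 t0 < F2 t by rewrite F2lt.
have yb : F2 t < F2 t0 + 1 by rewrite -F2p F2lt.
have base1' : rel (F1 t0 + 1) (F2 t0 + 1) by apply: rel_sym; rewrite -F1p -F2p.
have [m hm] := rel_translate (hfun AK) (cover_img F2l comp2 AK Kt) (cover_img F1l comp1 AK Kt).
move: base base1' n1a n1b n2a n2b ax xa by_ yb hm.
set a := F1 t0; set b := F2 t0; set x := F1 t; set y := F2 t.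
move=> bs bs1 n1a n1b n2a n2b ax xa by_ yb hm.
have [mneg|mpos|m0] := ltrgtP m 0; last by rewrite m0 addr0 in hm.
- have mm : m%:~R <= (-1 : R) by rewrite -mulrN1z ler_int; lia.
  have [c|c] := leP (x + m%:~R) b.
  + exfalso; apply: n1b; apply: rel_sym.
    apply: (rel_sub' (rel_sym hm)); left; lra.
  + have r3 : rel (x + m%:~R) a by apply: (rel_sub' bs); left; lra.
    have := rel_transl (- m) r3; rewrite -addrA mulrNz subrr addr0 => r4.
    exfalso; apply: n2a; apply: (rel_sub r4); left; lra.
- have mm : (1 : R) <= m%:~R by rewrite ler1z; lia.
  have [c|c] := leP (b + 1) (x + m%:~R).
  + exfalso; apply: n2b; apply: (rel_sub hm); left; lra.
  + have r3 : rel (a + 1) (x + m%:~R) by apply: (rel_sub bs1); left; lra.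
    have := rel_transl (- m) r3; rewrite -[x + _ + _]addrA mulrNz subrr addr0 => r4.
    exfalso; apply: n1a; apply: rel_sym; apply: (rel_sub' r4); left; lra.
Qed.

Lemma claim t K : Ahat K -> K (cover t) -> rel (F2 t) (F1 t).
Proof.
move=> AK Kt.
have [t' [a b c]] := shift_into t0 t.
have [m hm] := cover_eqZ (esym c).
rewrite hm (lift_intD F1p) (lift_intD F2p); apply: rel_transl.
by apply: (claim0 (K := K)) => //; [rewrite a b | rewrite c].
Qed.

Lemma orbit_in n : exists2 K, Ahat K & K (cover (iter n F1 t0)).
Proof.
elim: n => [|n [K AK HK]]; first by exists J0.
by exists (h K); [exact: hfun | exact: cover_img F1l comp1 AK HK].
Qed.

Lemma orbit_rel n : rel (iter n F2 t0) (iter n F1 t0).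
Proof.
elim: n => [|n ih]; first exact: rel_refl AJ0 J0t0.
have [K AK HK] := orbit_in n.
apply: rel_trans (rel_image F2c F2m F2l comp2 ih) _.
exact: claim AK HK.
Qed.

Lemma orbit_close n : `|iter n F2 t0 - iter n F1 t0| < 1.
Proof. exact: rel_bound (orbit_rel n). Qed.

End Two.

End Comb.
End S.
Section S.
Variable R : realType.
Local Notation cover := (@Defs.cover R).
Local Notation S1 := (@Defs.S1 R).
Implicit Types s t p q u : R.

Lemma iter_shift (F G : R -> R) (c : int) x : per1 F ->
  (forall t, G t = F t + c%:~R) ->
  forall n, iter n G x = iter n F x + (n%:Z * c)%:~R.
Proof.
move=> Fp hG; elim=> [|n ih]; first by rewrite /= mul0r addr0.
rewrite /= ih hG lift_intD // -addrA -intrD; congr (_ + _%:~R).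
by rewrite -addn1 PoszD mulrDl mul1r.
Qed.

Lemma shift_rot (F G : R -> R) (rho : R) (c : int) x : per1 F ->
  (forall t, G t = F t + c%:~R) ->
  (fun n => iter n F x / n%:R) @ \oo --> rho ->
  (fun n => iter n G x / n%:R) @ \oo --> rho + c%:~R.
Proof.
move=> Fp hG hF.
have h0 : (fun n => iter n G x / n%:R - iter n F x / n%:R) @ \oo --> (c%:~R : R).
  apply: (my_cvg_bnd (C:=0)) => n n0.
  have nR : (0 : R) < n%:R by rewrite ltr0n.
  rewrite (iter_shift x Fp hG) intrM mul0r.
  have -> : (iter n F x + n%:~R * c%:~R) / n%:R - iter n F x / n%:R - c%:~R = 0.
    by field; rewrite gt_eqF.
  by rewrite normr0.
rewrite (_ : (fun n => iter n G x / n%:R) =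
   ((fun n => iter n G x / n%:R - iter n F x / n%:R) \+ (fun n => iter n F x / n%:R))); last first.
  by apply/funext => n /=; rewrite subrK.
rewrite addrC; exact: cvgD h0 hF.
Qed.

Lemma final (Ahat : set (set (R * R))) (h : set (R * R) -> set (R * R))
  (Asub : forall J, Ahat J -> J `<=` S1)
  (Ane : forall J, Ahat J -> J !=set0)
  (Adis : forall J K, Ahat J -> Ahat K -> J <> K -> J `&` K = set0)
  (Atwo : exists J1 J2, [/\ Ahat J1, Ahat J2 & J1 <> J2])
  (Ashape : forall J, Ahat J -> (exists z, J = [set z]) \/ open_arc J)
  (hfun : forall J, Ahat J -> Ahat (h J))
  (g1 g2 : R * R -> R * R) :
  orient_pres_homeo g1 -> orient_pres_homeo g2 ->
  compatible Ahat h g1 -> compatible Ahat h g2 ->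
  exists r : R, has_rotation_number g1 r /\ has_rotation_number g2 r.
Proof.
move=> hg1 hg2 comp1 comp2.
case: hg1 => [[[_ gi1 _] _] [F1 [[F1c F1l] F1p]]].
case: hg2 => [[[_ gi2 _] _] [F2 [[F2c F2l] F2p]]].
have F1m := lift_mono F1c (lft_inj gi1 F1l F1p) F1p.
have F2m := lift_mono F2c (lft_inj gi2 F2l F2p) F2p.
have F1h : {homo F1 : x y / x <= y} by move=> x y; rewrite F1m.
have F2h : {homo F2 : x y / x <= y} by move=> x y; rewrite F2m.
have [rho1 hr1] := rot_exists F1h F1p.
have [rho2 hr2] := rot_exists F2h F2p.
have [J0 [J2 [AJ0 _ _]]] := Atwo.
have [z Jz] := Ane _ AJ0.
have [t0 ht0] := cover_surj (Asub _ AJ0 _ Jz).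
have J0t0 : J0 (cover t0) by rewrite ht0.
have [k hk] := rel_translate Ashape (hfun _ AJ0)
   (cover_img F2l comp2 AJ0 J0t0)
   (cover_img F1l comp1 AJ0 J0t0).
pose F1' := fun t => F1 t + k%:~R.
have F1'c : continuous F1'.
  by move=> x; apply: continuousD; [exact: F1c | exact: cvg_cst].
have F1'm : {mono F1' : x y / x <= y} by move=> x y; rewrite /F1' lerD2r F1m.
have F1'l : forall t, cover (F1' t) = g1 (cover t) by move=> t; rewrite /F1' cover_intD.
have F1'p : per1 F1' by move=> t; rewrite /F1' F1p; ring.
have close := orbit_close Asub Ane Adis Atwo Ashape hfun F1'c F2c F1'm F2m F1'l F2l F1'p F2p
   comp1 comp2 gi1 gi2 AJ0 J0t0 hk.
have it1 : forall n, iter n F1' t0 = iter n F1 t0 + (n%:Z * k)%:~R.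
  by apply: iter_shift.
have e12 : rho2 = rho1 + k%:~R.
  have h0 : (fun n => iter n F2 t0 / n%:R - iter n F1 t0 / n%:R) @ \oo --> (k%:~R : R).
    apply: (my_cvg_bnd (C:=1)) => n n0.
    have nR : (0 : R) < n%:R by rewrite ltr0n.
    have e : iter n F2 t0 / n%:R - iter n F1 t0 / n%:R - k%:~R =
       (iter n F2 t0 - iter n F1' t0) / n%:R.
      by rewrite it1 intrM; field; rewrite gt_eqF.
    rewrite e normrM [`|_^-1|]ger0_norm; last by rewrite invr_ge0 ltW.
    by rewrite ler_pM2r ?invr_gt0 // ltW.
  have h1 : (fun n => iter n F2 t0 / n%:R) @ \oo --> (k%:~R + rho1).
    rewrite (_ : (fun n => iter n F2 t0 / n%:R) =
      ((fun n => iter n F2 t0 / n%:R - iter n F1 t0 / n%:R) \+ (fun n => iter n F1 t0 / n%:R))); last first.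
      by apply/funext => n /=; rewrite subrK.
    exact: cvgD h0 (hr1 t0).
  by rewrite addrC; apply: (cvg_unique _ (hr2 t0) h1).
exists rho1; split.
- move=> G [Gc Gl] x.
  have [c hc] := lift_diff F1c Gc (fun t => etrans (Gl t) (esym (F1l t))).
  by exists c; apply: shift_rot F1p hc (hr1 x).
- move=> G [Gc Gl] x.
  have [c hc] := lift_diff F2c Gc (fun t => etrans (Gl t) (esym (F2l t))).
  exists (k + c); rewrite intrD addrA -e12.
  exact: shift_rot F2p hc (hr2 x).
Qed.
End S.

Unset Implicit Arguments.

Theorem mainTheorem4 (R : realType) (Ahat : set (set (R * R)))
  (h : set (R * R) -> set (R * R)) (g1 g2 : R * R -> R * R) :
  (forall J, Ahat J -> J `<=` @S1 R) ->
  (forall J, Ahat J -> J !=set0) ->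
  (forall J, Ahat J -> connected J) ->
  (forall J K, Ahat J -> Ahat K -> J <> K -> J `&` K = set0) ->
  (exists J1 J2 J3, [/\ Ahat J1, Ahat J2, Ahat J3 &
                        [/\ J1 <> J2, J1 <> J3 & J2 <> J3]]) ->
  @S1 R `<=` closure (\bigcup_(J in Ahat) J) ->
  (forall J, Ahat J -> (exists z, J = [set z]) \/ open_arc J) ->
  set_bij Ahat Ahat h ->
  order_preserving Ahat h ->
  orient_pres_homeo g1 -> orient_pres_homeo g2 ->
  compatible Ahat h g1 -> compatible Ahat h g2 ->
  exists r : R, has_rotation_number g1 r /\ has_rotation_number g2 r.
Proof.
move=> Asub Ane _ Adis Athree _ Ashape hbij _ hg1 hg2 c1 c2.
apply: (final Asub Ane Adis _ Ashape _ hg1 hg2 c1 c2).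
- case: Athree => J1 [J2 [J3 [A1 A2 A3 [n12 _ _]]]].
  by exists J1, J2.
- by case: hbij.
Qed.
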